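(* Let $C\subseteq\mathbb{R}^{n+1}$ be a proper open cone with base-point $b\in C$, let $S,T\in\mathcal T(C)\setminus\{C\}$, $p\in S$, $q\in T$, and suppose $f_{S,p}|_C$ and $f_{T,q}|_C$ are Busemann points of the Funk geometry on $C$. If $(z_k)_k$ is a sequence in $C$ that is an almost-geodesic with respect to the Funk metric $\mathcal F_C$ and converges to $f_{S,p}|_C$ in the Funk sense, then \[\lim_{k\to\infty}\big(\mathcal F_C(b,z_k)+f_{T,q}(z_k)\big)=\inf_{(x_k)_k}\liminf_{k\to\infty}\big(\mathcal F_C(b,x_k)+f_{T,q}(x_k)\big),\] where the infimum is taken over all sequences $(x_k)_k$ in $C$ converging to $f_{S,p}|_C$ in the Funk sense on $C$.
   Context: An open cone is a nonempty open convex $C$ with $\lambda C\subseteq C$ for $\lambda>0$; proper means $\overline C\cap(-\overline C)=\{0\}$. For an open cone $K$, $y\in K$, $x\in\mathbb{R}^{n+1}$: $M(x/y;K)=\inf\{\lambda>0\colon\lambda y-x\in\overline K\}$ and $\mathcal F_K(x,y)=\log M(x/y;K)$ (Funk metric). For $z\in\partial C$, $\tau(C,z)=\{\lambda(w-z)\colon\lambda>0,w\in C\}$; $\Gamma(\Pi)=\{\tau(T,z)\colon T\in\Pi,z\in\partial T\}$; $\mathcal T(C)=\bigcup_{k=1}^n\Gamma^k(\{C\})$ (all contain $C$). For $T\in\mathcal T(C)\cup\{C\}$ and $p\in T$, $f_{T,p}(w)=\mathcal F_T(w,p)-\mathcal F_T(b,p)$. A sequence $(x_k)$ in $C$ converges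 to $f$ in the Funk sense on $C$ if $f_{C,x_k}\to f$ pointwise on $C$. $f$ is a Busemann point of the Funk geometry on $C$ if some Funk $\epsilon$-almost-geodesic $(x_k)$ in $C$ (i.e. $\sum_{i=0}^m\mathcal F_C(x_i,x_{i+1})\leq\mathcal F_C(x_0,x_{m+1})+\epsilon$ for all $m$, some $\epsilon>0$) converges to $f$ in the Funk sense and $f$ is not of the form $\mathcal F_C(\cdot,p)-\mathcal F_C(b,p)$, $p\in C$. A sequence $(z_k)$ is an almost-geodesic with respect to $\mathcal F_C$ if there are reals $0=t_0<t_1<\cdots\to\infty$ such that for every $\epsilon>0$ there is $N$ with $|\mathcal F_C(z_0,z_j)+\mathcal F_C(z_j,z_k)-t_k|<\epsilon$ for all $k\geq j\geq N$. *)

(* Defs.v *)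
From HB Require Import structures.
From mathcomp Require Import all_boot all_order all_algebra.
From mathcomp Require Import all_classical all_reals all_analysis.
Set Implicit Arguments. Unset Strict Implicit. Unset Printing Implicit Defensive.
Import Order.TTheory GRing.Theory Num.Theory.
Import numFieldNormedType.Exports.
Local Open Scope classical_set_scope.
Local Open Scope ring_scope.

Section Funk.
Variables (R : realType) (n : nat).
Notation V := 'rV[R]_(n.+1).

Definition open_cone (C : set V) : Prop :=
  (exists x, C x) /\ open C /\
  (forall x y (t : R), C x -> C y -> 0 <= t <= 1 -> C (t *: x + (1 - t) *: y)) /\
  (forall (l : R) x, 0 < l -> C x -> C (l *: x)).

Definition proper_cone (C : set V) : Prop :=
  forall x, closure C x -> closure C (- x) -> x = 0.

Definition Mfunk (K : set V) (x y : V) : R :=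
  inf [set l : R | 0 < l /\ closure K (l *: y - x)].

Definition funk (K : set V) (x y : V) : R := ln (Mfunk K x y).

Definition bdry (C : set V) : set V := closure C `\` interior C.

Definition tau (C : set V) (z : V) : set V :=
  [set v | exists (l : R) w, 0 < l /\ C w /\ v = l *: (w - z)].

Definition Gamma (Pi : set (set V)) : set (set V) :=
  [set U | exists T z, Pi T /\ bdry T z /\ U = tau T z].

Definition Tcal (C : set V) : set (set V) :=
  [set U | exists k : nat, (1 <= k <= n)%N /\ iter k Gamma [set C] U].

Definition fTp (T : set V) (b p : V) (w : V) : R :=
  funk T w p - funk T b p.

Definition funk_conv (C : set V) (b : V) (x : nat -> V) (f : V -> R) : Prop :=
  (forall k, C (x k)) /\
  (forall w, C w -> (fun k => fTp C b (x k) w) @ \oo --> f w).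

Definition funk_eps_almost_geodesic (C : set V) (eps : R) (x : nat -> V) : Prop :=
  (forall k, C (x k)) /\
  (forall m : nat, \sum_(0 <= i < m.+1) funk C (x i) (x i.+1)
                   <= funk C (x 0%N) (x m.+1) + eps).

Definition busemann (C : set V) (b : V) (f : V -> R) : Prop :=
  (exists (eps : R) (x : nat -> V), 0 < eps /\ funk_eps_almost_geodesic C eps x /\
      funk_conv C b x f) /\
  ~ (exists p, C p /\ forall w, C w -> f w = fTp C b p w).

Definition funk_almost_geodesic (C : set V) (z : nat -> V) : Prop :=
  exists t : nat -> R,
    t 0%N = 0 /\ (forall k, t k < t k.+1) /\ t @ \oo --> +oo /\
    forall eps : R, 0 < eps -> exists N : nat, forall j k : nat,
      (N <= j)%N -> (j <= k)%N ->
      `| funk C (z 0%N) (z j) + funk C (z j) (z k) - t k | < eps.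

End Funk.

(* Main.v *)
Require Import Defs.
From HB Require Import structures.
From mathcomp Require Import all_boot all_order all_algebra.
From mathcomp Require Import all_classical all_reals all_analysis.
From mathcomp Require Import lra.
Import Order.TTheory GRing.Theory Num.Theory.
Import numFieldNormedType.Exports.
Local Open Scope classical_set_scope.
Local Open Scope ring_scope.

Section Cone.
Variables (R : realType) (n : nat).
Local Notation V := 'rV[R]_(n.+1).
Variable C : set V.
Hypothesis hC : open_cone C.
Hypothesis hP : proper_cone C.

Lemma clP (x : V) : closure C x <-> forall e : R, 0 < e -> exists a, C a /\ `|x - a| < e.
Proof.
split.
- move=> cx e e0; have := cx (ball x e) (nbhsx_ballx _ _ e0).
  by move=> [a [Ca]]; rewrite -ball_normE /=; exists a.
- move=> H B /nbhs_ballP [e /= e0 eB].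
  have [a [Ca ha]] := H e e0; exists a; split => //; apply: eB.
  by rewrite -ball_normE.
Qed.

Lemma open_dir (u v : V) : C u -> exists s : R, 0 < s /\ C (u + s *: v).
Proof.
move=> Cu; case: hC => _ [oC _].
have : nbhs u C by apply: open_nbhs_nbhs; split.
move=> /nbhs_ballP [e /= e0 eB].
exists (e / (`|v| + 1)); split; first by rewrite divr_gt0 // ltr_wpDl.
apply: eB; rewrite -ball_normE /= opprD addrA subrr sub0r normrN normrZ.
rewrite ger0_norm; last by rewrite divr_ge0 // ?ltW // addr_ge0.
rewrite -mulrA mulrC -ltr_pdivlMr // divrr ?unitfE ?gt_eqF //.
by rewrite mulrC ltr_pdivrMr ?mul1r ?ltrDl // ltr_wpDl.
Qed.

Lemma cone_add (a c : V) : C a -> C c -> C (a + c).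
Proof.
case: hC => _ [_ [cv sc]] Ca Cc.
have h1 : 0 <= (2:R)^-1 <= 1.
  apply/andP; split; first by rewrite invr_ge0 ler0n.
  by rewrite invf_le1 // ler1n.
have h := cv a c (2^-1) Ca Cc h1.
have := sc 2 _ (ltr0n _ 2) h.
congr C; rewrite scalerDr !scalerA mulrBr mulrV ?unitfE // mulr1.
have -> : (2 - 1 : R) = 1 by rewrite -natr1 addrK.
by rewrite !scale1r.
Qed.

Lemma cone_sc (l : R) (x : V) : 0 < l -> C x -> C (l *: x).
Proof. by case: hC => _ [_ [_ sc]]; apply: sc. Qed.

Lemma cl_add (a c : V) : closure C a -> closure C c -> closure C (a + c).
Proof.
move=> /clP ha /clP hc; apply/clP => e e0.
have e20 : 0 < e / 2 by rewrite divr_gt0.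
have [a' [Ca' ha']] := ha _ e20; have [c' [Cc' hc']] := hc _ e20.
exists (a' + c'); split; first exact: cone_add.
rewrite opprD addrACA (le_lt_trans (ler_normD _ _)) //.
by rewrite [e]splitr ltrD.
Qed.

Lemma cl_scale (t : R) (a : V) : 0 < t -> closure C a -> closure C (t *: a).
Proof.
move=> t0 /clP ha; apply/clP => e e0.
have [a' [Ca' ha']] := ha _ (divr_gt0 e0 t0).
exists (t *: a'); split; first exact: cone_sc.
rewrite -scalerBr normrZ gtr0_norm // mulrC -ltr_pdivlMr //.
Qed.

Lemma cl_lim (x y : V) : (forall l : R, 0 < l -> closure C (l *: y - x)) ->
  closure C (- x).
Proof.
move=> H; apply/clP => e e0.
have e20 : 0 < e / 2 by rewrite divr_gt0.
have y1 : 0 < `|y| + 1 by rewrite ltr_wpDl.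
have l0 : 0 < e / 2 / (`|y| + 1) by rewrite divr_gt0.
have /clP/(_ _ e20) [c [Cc hc]] := H _ l0.
exists c; split => //.
have -> : - x - c = - ((e / 2 / (`|y| + 1)) *: y) + ((e / 2 / (`|y| + 1)) *: y - x - c).
  by rewrite addrA addKr.
rewrite (le_lt_trans (ler_normD _ _)) //.
rewrite [X in _ < X]splitr ltrD // normrN normrZ.
rewrite gtr0_norm // mulrAC ltr_pdivrMr // ltr_pM2l // ltrDl.
by []. Qed.

Lemma not0 : ~ C 0.
Proof.
move=> C0; pose v : V := const_mx 1.
have [s1 [s10 h1]] := open_dir 0 v C0.
have [s2 [s20 h2]] := open_dir 0 (- v) C0.
rewrite add0r in h1; rewrite add0r in h2.
have h3 : C (s2 *: v).
  have := cone_sc _ _ (divr_gt0 s20 s10) h1.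
  by rewrite scalerA mulrVK // unitfE gt_eqF.
have := hP _ (subset_closure h3); rewrite -scalerN => /(_ (subset_closure h2)).
move=> /(congr1 (fun M : V => M 0 0)); rewrite !mxE mulr1 => /eqP.
by rewrite gt_eqF.
Qed.

Definition Aset (x y : V) := [set l : R | 0 < l /\ closure C (l *: y - x)].

Lemma MfunkE x y : Mfunk C x y = inf (Aset x y).
Proof. by []. Qed.

Lemma A_ne x y : C y -> exists l, Aset x y l.
Proof.
move=> Cy; have [s [s0 h]] := open_dir y (- x) Cy.
exists s^-1; split; first by rewrite invr_gt0.
apply: subset_closure.
have si : 0 < s^-1 by rewrite invr_gt0.
have := cone_sc _ _ si h.
by rewrite scalerDr scalerA mulVf ?gt_eqF // scale1r.
Qed.

Lemma A_lb x y : has_lbound (Aset x y).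
Proof. by exists 0 => l [l0 _]; exact: ltW. Qed.

Lemma A_up x y l l' : C y -> Aset x y l -> l <= l' -> Aset x y l'.
Proof.
move=> Cy [l0 hl]; rewrite le_eqVlt => /orP [/eqP <- //|ll'].
split; first exact: lt_trans ll'.
have -> : l' *: y - x = (l' - l) *: y + (l *: y - x).
  by rewrite scalerBl addrA subrK.
apply: cl_add => //; apply: subset_closure; apply: cone_sc => //.
by rewrite subr_gt0.
Qed.

Lemma M_ge0 x y : C y -> 0 <= Mfunk C x y.
Proof.
move=> Cy; rewrite MfunkE; apply: lb_le_inf; first exact: A_ne.
by move=> l [l0 _]; exact: ltW.
Qed.

Lemma M_pos x y : C x -> C y -> 0 < Mfunk C x y.
Proof.
move=> Cx Cy; rewrite lt_def M_ge0 // andbT; apply/negP => /eqP M0.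
have H : forall l : R, 0 < l -> closure C (l *: y - x).
  move=> l l0.
  have : inf (Aset x y) < l by rewrite -MfunkE M0.
  move=> /(inf_lt (A_ne x y Cy)) [l1 Al1 l1l].
  by have [] := A_up x y l1 l Cy Al1 (ltW l1l).
have := hP _ (subset_closure Cx) (cl_lim _ _ H) => x0.
by apply: not0; rewrite -x0.
Qed.

Lemma div_swap (a c m : R) : 0 < c -> 0 < m -> a / m <= c -> a / c <= m.
Proof. by move=> c0 m0; rewrite !ler_pdivrMr // mulrC. Qed.

Lemma div_mul (a c m : R) : 0 < c -> a / c <= m -> a <= c * m.
Proof. by move=> c0; rewrite ler_pdivrMr // mulrC. Qed.

Lemma M_mul x y z : C x -> C y -> C z ->
  Mfunk C x z <= Mfunk C x y * Mfunk C y z.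
Proof.
move=> Cx Cy Cz.
have Hlm : forall l m, Aset x y l -> Aset y z m -> Mfunk C x z <= l * m.
  move=> l m [l0 hl] [m0 hm]; rewrite MfunkE; apply: ge_inf; first exact: A_lb.
  split; first exact: mulr_gt0.
  have <- : l *: (m *: z - y) + (l *: y - x) = (l * m) *: z - x.
    by rewrite scalerBr scalerA addrA subrK.
  by apply: cl_add => //; apply: cl_scale.
have Mxy0 := M_pos x y Cx Cy.
have Am0 : forall m, Aset y z m -> 0 < m by move=> m [].
have H : forall m, Aset y z m -> Mfunk C x z / Mfunk C x y <= m.
  move=> m Am.
  have H2 : forall l, Aset x y l -> Mfunk C x z / m <= l.
    move=> l Al. rewrite (ler_pdivrMr _ _ (Am0 m Am)). exact: (Hlm l m Al Am).
  have := lb_le_inf (A_ne x y Cy) H2.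
  rewrite -MfunkE; apply: div_swap => //; exact: Am0.
have := lb_le_inf (A_ne y z Cz) H; rewrite -MfunkE.
exact: div_mul.
Qed.


Lemma funk_tri x y z : C x -> C y -> C z ->
  funk C x z <= funk C x y + funk C y z.
Proof.
move=> Cx Cy Cz; rewrite /funk -lnM ?posrE ?M_pos //.
by rewrite ler_ln ?posrE ?mulr_gt0 ?M_pos // M_mul.
Qed.

Lemma funk_self x : C x -> funk C x x <= 0.
Proof.
move=> Cx; apply: ln_le0; apply/ler_addgt0Pr => e e0; rewrite MfunkE.
apply: ge_inf; first exact: A_lb.
split; first exact: (addr_gt0 ltr01 e0).
have -> : (1 + e) *: x - x = e *: x by rewrite scalerDl scale1r addrAC subrr add0r.
by apply: subset_closure; apply: cone_sc.
Qed.

End Cone.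

Section Gen.
Variable R : realType.

Lemma lim_le_c (f : nat -> R) (l c : R) : f @ \oo --> l ->
  (\forall k \near \oo, f k <= c) -> l <= c.
Proof.
move=> h fc; rewrite leNgt; apply/negP => cl.
have H : \forall t \near \oo, c < f t by apply: cvgr_gt; [exact: h|exact: cl].
have [k [k1 k2]] := filter_ex (filterI fc H).
by move: k2; rewrite ltNge k1.
Qed.

Local Open Scope ereal_scope.

Lemma einf_ge (u : (\bar R)^nat) (c : \bar R) N :
  (forall k, (N <= k)%N -> c <= u k) -> c <= limn_einf u.
Proof.
move=> H; rewrite limn_einf_lim; apply: lime_ge; first exact: is_cvg_einfs.
exists N => // m /= Nm; apply: le_ereal_inf_tmp => _ [k /= mk <-].
by apply: H; apply: leq_trans mk.
Qed.

Lemma esup_le (u : (\bar R)^nat) (c : \bar R) N :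
  (forall k, (N <= k)%N -> u k <= c) -> limn_esup u <= c.
Proof.
move=> H; rewrite limn_esup_lim; apply: lime_le; first exact: is_cvg_esups.
exists N => // m /= Nm; apply: ge_ereal_sup => _ [k /= mk <-].
by apply: H; apply: leq_trans mk.
Qed.

Lemma cvg_sq (u : (\bar R)^nat) (L : \bar R) :
  limn_esup u <= L -> L <= limn_einf u -> u @ \oo --> L.
Proof.
move=> h1 h2; have h3 := limn_einf_sup u.
have E1 : limn_einf u = L.
  by apply/eqP; rewrite eq_le h2 andbT (le_trans h3).
have E2 : limn_esup u = L.
  by apply/eqP; rewrite eq_le h1 /= (le_trans h2).
apply: (@squeeze_cvge _ _ _ _ (einfs u) u (esups u)).
- apply: nearW => k; apply/andP; split.
    by apply: ereal_inf_lbound; exists k => /=.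
  by apply: ereal_sup_ubound; exists k => /=.
- by rewrite -E1 limn_einf_lim; exact: is_cvg_einfs.
- by rewrite -E2 limn_esup_lim; exact: is_cvg_esups.
Qed.

Local Close Scope ereal_scope.
Lemma arA (a b c u v w e : R) : b - c <= u -> u - v <= w + e ->
  a + b - a - w - e <= v + c.
Proof. lra. Qed.

Lemma arB (djk dbk d0k d0j dkk tk e : R) : dkk <= 0 -> `|d0k + dkk - tk| < e ->
  `|d0j + djk - tk| < e -> (djk - dbk) - (d0k - dbk) <= - d0j + (e + e).
Proof. rewrite !ltr_norml => h3 /andP [h4 _] /andP [_ h5]; lra. Qed.

Lemma arC (dbj xj x0 d0j e : R) : xj - x0 <= - d0j + (e + e) ->
  x0 - e <= d0j - dbj -> dbj + xj <= e + e + e.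
Proof. lra. Qed.

Lemma arD (g a w e : R) : a + w <= e / 4 + e / 4 + e / 4 -> g - e <= g - a - w - e / 4.
Proof. lra. Qed.

End Gen.

Theorem lemma4p7p2 (R : realType) (n : nat) (C : set 'rV[R]_(n.+1))
  (b : 'rV[R]_(n.+1)) (S T : set 'rV[R]_(n.+1)) (p q : 'rV[R]_(n.+1))
  (z : nat -> 'rV[R]_(n.+1)) :
  open_cone C -> proper_cone C -> C b ->
  Tcal C S -> S <> C -> Tcal C T -> T <> C -> S p -> T q ->
  busemann C b (fTp S b p) -> busemann C b (fTp T b q) ->
  (forall k, C (z k)) -> funk_almost_geodesic C z ->
  funk_conv C b z (fTp S b p) ->
  (fun k => ((funk C b (z k) + fTp T b q (z k))%:E)) @ \oo -->
    ereal_inf [set limn_einf (fun k => ((funk C b (x k) + fTp T b q (x k))%:E))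
              | x in [set x : nat -> 'rV[R]_(n.+1) | funk_conv C b x (fTp S b p)]].
Proof.
move=> hC hP Cb _ _ _ _ _ _ _ bT Cz agz cz.
have [[eps [y [_ [_ [Cy cy]]]]] _] := bT.
have Lip : forall u v, C u -> C v -> fTp T b q u - fTp T b q v <= funk C u v.
  move=> u v Cu Cv.
  have h := cvgB (cy u Cu) (cy v Cv).
  apply: (@lim_le_c _ (fun m => fTp C b (y m) u - fTp C b (y m) v)); first exact: h.
  apply: nearW => m /=.
  rewrite /fTp opprB addrA subrK lerBlDr.
  exact: (funk_tri _ _ _ hC hP _ _ _ Cu Cv (Cy m)).
have [_ czz] := cz.
have PA : forall x, funk_conv C b x (fTp S b p) -> forall j (e : R), 0 < e ->
  (((funk C b (z j) + fTp T b q (z j)) - funk C b (z j) - fTp S b p (z j) - e)%:E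
    <= limn_einf (fun k => (funk C b (x k) + fTp T b q (x k))%:E))%E.
  move=> x [Cx cx] j e e0.
  have hle : \forall k \near \oo, fTp C b (x k) (z j) <= fTp S b p (z j) + e.
    by apply: cvgr_le; [exact: cx _ (Cz j) | rewrite ltrDl].
  have [N _ HN] := hle.
  apply: (@einf_ge _ _ _ N) => k Nk; rewrite lee_fin.
  have h1 := HN k Nk. have h2 := Lip _ _ (Cz j) (Cx k). change (is_true (funk C (z j) (x k) - funk C b (x k) <= fTp S b p (z j) + e)) in h1.
exact: (@arA _ _ _ _ _ _ _ _ h2 h1).
have PB : forall e : R, 0 < e -> exists N, forall j, (N <= j)%N ->
    funk C b (z j) + fTp S b p (z j) <= e + e + e.
  move=> e e0; case: agz => t [_ [_ [_ Ht]]].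
  have [N1 HN1] := Ht e e0.
  have hge : \forall j \near \oo, fTp S b p (z 0%N) - e <= fTp C b (z j) (z 0%N).
    by apply: cvgr_ge; [exact: czz _ (Cz 0%N) | rewrite ltrBlDr ltrDl].
  have [N2 _ HN2] := hge.
  exists (maxn N1 N2) => j; rewrite geq_max => /andP [j1 j2].
  have hlim : fTp S b p (z j) - fTp S b p (z 0%N) <= - funk C (z 0%N) (z j) + (e + e).
    apply: (@lim_le_c _ (fun k => fTp C b (z k) (z j) - fTp C b (z k) (z 0%N))).
      have hh := cvgB (czz _ (Cz j)) (czz _ (Cz 0%N)).
      exact: hh.
    exists j => // k /= jk.
    have := HN1 j k j1 jk; have := HN1 k k (leq_trans j1 jk) (leqnn k).
    have := funk_self _ _ _ hC _ (Cz k).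
    move=> h3 h4 h5.
    exact: (@arB _ _ _ _ _ _ _ _ h3 h4 h5).
  have h6 := HN2 j j2.
  change (is_true (fTp S b p (z 0%N) - e <= funk C (z 0%N) (z j) - funk C b (z j))) in h6.
  exact: (@arC _ _ _ _ _ _ hlim h6).
apply: cvg_sq.
- apply/lee_addgt0Pr => e e0.
  have e4 : 0 < e / 4 by rewrite divr_gt0.
  have [N HN] := PB _ e4.
  apply: (@esup_le _ _ _ N) => k Nk.
  rewrite -leeBlDr // -EFinB.
  apply: le_ereal_inf_tmp => _ [x xS <-].
  apply: le_trans (PA x xS k (e / 4) e4).
  rewrite lee_fin; exact: (@arD _ _ _ _ _ (HN k Nk)).
- by apply: ereal_inf_lbound; exists z.
Qed.
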